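(* Let $d\ge 1$ and let $\mathbf{X}=(X_1,\dots,X_d)$ and $\mathbf{Y}=(Y_1,\dots,Y_d)$ be random vectors on $\mathbb{R}^d$ with distribution functions $F$ and $G$, each satisfying condition $(\mathcal{H})$. Then $F=G$ if and only if $\|\mathbf{x}\|_{\mathbf{X}}=\|\mathbf{x}\|_{\mathbf{Y}}$ for all $\mathbf{x}\in\mathbb{R}^{d+1}$.
   Context: Condition $(\mathcal{H})$ on a random vector $\mathbf{X}=(X_1,\dots,X_d)$: each $X_i$ is almost surely nonnegative with $0<E(X_i)<\infty$. For such $\mathbf{X}$ and $\mathbf{x}=(x_0,x_1,\dots,x_d)\in\mathbb{R}^{d+1}$, define $\|\mathbf{x}\|_{\mathbf{X}}:=E\big(\max(|x_0|,|x_1|X_1,\dots,|x_d|X_d)\big)$. *)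

(* Defs.v *)
From HB Require Import structures.
From mathcomp Require Import all_boot all_order all_algebra.
From mathcomp Require Import all_classical all_reals all_analysis.
Set Implicit Arguments. Unset Strict Implicit. Unset Printing Implicit Defensive.
Import Order.TTheory GRing.Theory Num.Theory.
Local Open Scope ring_scope.
Local Open Scope classical_set_scope.

Definition random_vector {d0} {T : measurableType d0} {R : realType} (d : nat)
  (X : 'I_d -> T -> R) : Prop :=
  forall i, measurable_fun setT (X i).

Definition condH {d0} {T : measurableType d0} {R : realType} (P : probability T R)
  (d : nat) (X : 'I_d -> T -> R) : Prop :=
  forall i, {ae P, forall w, 0 <= X i w} /\
            (0 < 'E_P[X i])%E /\ ('E_P[X i] < +oo)%E.

Definition distr_fun {d0} {T : measurableType d0} {R : realType} (P : probability T R)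
  (d : nat) (X : 'I_d -> T -> R) (t : 'I_d -> R) : \bar R :=
  P [set w | forall i, X i w <= t i].

(* ||x||_X = E( max(|x_0|, |x_1| X_1, ..., |x_d| X_d) ) for x = (x_0,...,x_d),
   x_0 = x ord0 and x_i = x (lift ord0 (i-1)). *)
Definition Xnorm {d0} {T : measurableType d0} {R : realType} (P : probability T R)
  (d : nat) (X : 'I_d -> T -> R) (x : 'I_d.+1 -> R) : \bar R :=
  'E_P[fun w => \big[Num.max/`|x ord0|]_(i < d) (`|x (lift ord0 i)| * X i w)].

(* Main.v *)
Set Warnings "-all".
Require Import Defs.
From HB Require Import structures.
From mathcomp Require Import all_boot all_order all_algebra.
From mathcomp Require Import all_classical all_reals all_analysis.
Import Order.TTheory GRing.Theory Num.Theory.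
Local Open Scope ring_scope.
From mathcomp Require Import measurable_realfun.
Import numFieldNormedType.Exports.
Local Open Scope classical_set_scope.

Section generic.
Context {d0 : measure_display} {T : measurableType d0} {R : realType}
  (P : probability T R) (n : nat) (X : 'I_n -> T -> R).
Hypothesis hX : random_vector X.

Lemma bigmax_idx (x y : R) (s : seq 'I_n) (F : 'I_n -> R) : y <= x ->
  \big[Num.max/x]_(i <- s) F i = Num.max x (\big[Num.max/y]_(i <- s) F i).
Proof.
move=> yx; elim: s => [|j s IH]; first by rewrite !big_nil max_l.
by rewrite !big_cons IH maxCA.
Qed.

Definition W (a : 'I_n -> R) w := \big[Num.max/0]_(i < n) (`|a i| * X i w).

Lemma W_ge0 a w : 0 <= W a w.
Proof. by rewrite /W (bigmax_idx _ _ _ _ (lexx (0:R))) le_max lexx. Qed.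

Lemma mW a : measurable_fun setT (W a).
Proof.
rewrite /W; elim: (index_enum _) => [|j s IH].
  by under eq_fun do rewrite big_nil; exact: measurable_cst.
under eq_fun do rewrite big_cons.
apply: measurable_maxr => //; apply: measurable_funM => //; exact: measurable_cst.
Qed.

Lemma W_le a w r : 0 <= r -> (W a w <= r) <-> (forall i, `|a i| * X i w <= r).
Proof.
move=> r0; rewrite /W; split.
  by move/bigmax_leP => [_ h] i; exact: h.
by move=> h; apply/bigmax_leP; split.
Qed.

Definition V (c : R) a w := Num.max `|c| (W a w).

Lemma Xnorm_W (x : 'I_n.+1 -> R) :
  Xnorm P X x = ('E_P[V (x ord0) (fun i => x (lift ord0 i))])%E.
Proof.
rewrite /Xnorm /V /W; congr (expectation P _); apply/funext => w.
by rewrite (bigmax_idx _ _ _ _ (normr_ge0 _)).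
Qed.


Lemma mS' (t : 'I_n -> R) (s : seq 'I_n) :
  measurable [set w | forall i, i \in s -> X i w <= t i].
Proof.
elim: s => [|j s IH].
  rewrite (_ : [set w | _] = setT); first exact: measurableT.
  by apply/seteqP; split => w //= _ i; rewrite in_nil.
rewrite (_ : [set w | _] = X j @^-1` `]-oo, t j] `&` [set w | forall i, i \in s -> X i w <= t i]).
  apply: measurableI => //; rewrite -[_ @^-1` _]setTI; apply: hX => //; exact: measurable_itv.
apply/seteqP; split => w /=.
  move=> h; split; first by rewrite in_itv /= h ?mem_head.
  by move=> i iS; apply: h; rewrite in_cons iS orbT.
move=> [hj hs] i; rewrite in_cons => /orP[/eqP -> |iS]; last exact: hs.
by move: hj; rewrite in_itv.
Qed.

Lemma mS (t : 'I_n -> R) : measurable [set w | forall i, X i w <= t i].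
Proof.
rewrite (_ : [set w | _] = [set w | forall i, i \in enum 'I_n -> X i w <= t i]); first exact: mS'.
apply/seteqP; split => w /= h i; first by move=> _; exact: h.
by apply: h; rewrite mem_enum.
Qed.

Definition tm (a : 'I_n -> R) (r : R) (m : nat) (i : 'I_n) : R :=
  if a i == 0 then m%:R else r / `|a i|.

Lemma L1 a r : 0 <= r ->
  (fun m => distr_fun P X (tm a r m)) @ \oo --> P [set w | W a w <= r].
Proof.
move=> r0.
have eqS : [set w | W a w <= r] = \bigcup_m [set w | forall i, X i w <= tm a r m i].
  apply/seteqP; split => w /=.
    move/(@W_le a w r r0) => h.
    exists (\max_(i < n) Num.bound (X i w))%N => // i.
    rewrite /tm; case: ifP => [_|/negbT ai0].
      apply: ltW; apply: (lt_le_trans (unstable.ltr_bound _)).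
      by rewrite ler_nat (leq_bigmax i).
    by rewrite ler_pdivlMr ?normr_gt0 // mulrC.
  move=> [m _ h]; apply/(@W_le a w r r0) => i.
  move: (h i); rewrite /tm; case: ifP => [/eqP -> _|/negbT ai0].
    by rewrite normr0 mul0r.
  by rewrite ler_pdivlMr ?normr_gt0 // mulrC.
rewrite eqS; apply: nondecreasing_cvg_mu.
- by move=> m; exact: mS.
- rewrite -eqS -[Z in measurable Z]setTI.
  have := mW a measurableT _ (measurable_itv `]-oo, r]%R).
  by congr measurable; apply/seteqP; split => w /=; rewrite in_itv.

- move=> m m' mm'; apply/subsetPset => w /= h i; apply: (le_trans (h i)); rewrite /tm; case: ifP => // _.
  by rewrite ler_nat.
Qed.


Lemma mV c a : measurable_fun setT (V c a).
Proof. apply: measurable_maxr; [exact: measurable_cst | exact: mW]. Qed.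

Lemma V_ge0 c a w : 0 <= V c a w.
Proof. by rewrite /V le_max normr_ge0. Qed.

Definition Vrv c a : {RV P >-> R} := mfun_Sub (mem_set (mV c a)).

Lemma EV_ccdf c a : ('E_P[V c a] =
  \int[@lebesgue_measure R]_(r in `[0%R, +oo[) P [set w | (r < V c a w)%R])%E.
Proof.
have := @ge0_expectation_ccdf _ _ _ P (Vrv c a) (V_ge0 c a) => ->.
apply: eq_integral => r _; rewrite /ccdf /distribution /pushforward /=.
by congr (P _); apply/seteqP; split => w /=; rewrite in_itv /= andbT.
Qed.


Lemma mle (f : T -> R) r : measurable_fun setT f -> measurable [set w | f w <= r].
Proof.
move=> mf; rewrite -[Z in measurable Z]setTI.
have := mf measurableT _ (measurable_itv `]-oo, r]%R).
by congr measurable; apply/seteqP; split => w /=; rewrite in_itv.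
Qed.

Lemma PVgt c a (r : R) : P [set w | r < V c a w] =
  (1 - (if (`|c| <= r)%R then P [set w | (W a w <= r)%R] else 0))%E.
Proof.
have -> : [set w | r < V c a w] = ~` [set w | V c a w <= r].
  by apply/seteqP; split => w /=; rewrite ltNge => /negP.
rewrite probability_setC; last exact: mle (mV c a).
congr (_ - _)%E; case: ifP => cr.
  by congr (P _); apply/seteqP; split => w /=; rewrite /V ge_max cr.
rewrite (_ : [set w | _] = set0) ?measure0 //.
by apply/seteqP; split => w //=; rewrite /V ge_max cr.
Qed.


Hypothesis HX : condH P X.

Lemma intX i : P.-integrable setT (EFin \o X i).
Proof.
apply/integrableP; split; first exact/measurable_EFinP.
have [hae [_ hfin]] := HX i.
rewrite (@ae_eq_integral _ _ _ _ _ (fun w => (X i w)%:E)) //.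
- by move: hfin; rewrite unlock.
- by apply: measurableT_comp => //; apply/measurable_EFinP.
- exact/measurable_EFinP.
- apply: filterS hae => w /= h _.
  by rewrite ger0_norm.
Qed.

Lemma intV c a : P.-integrable setT (EFin \o V c a).
Proof.
pose g := fun w => ((`|c|)%:E + \sum_(i < n) (`|a i|)%:E * (`|X i w|)%:E)%E.
apply: (@le_integrable _ _ _ _ _ measurableT _ g).
- exact/measurable_EFinP/mV.
- move=> w _ /=; rewrite /g sumEFin -EFinD !abse_EFin lee_fin.
  have s0 : 0 <= \sum_(i < n) `|a i| * `|X i w| by apply: sumr_ge0 => i _; rewrite mulr_ge0.
  rewrite (ger0_norm (V_ge0 c a w)) [Z in _ <= Z]ger0_norm ?addr_ge0 //.
  rewrite /V ge_max lerDl s0 /= /W.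
  apply: (@le_trans _ _ (\sum_(i < n) `|a i| * `|X i w|)); last by rewrite lerDr.
  apply: bigmax_le => // i _.
  rewrite (bigD1 i) //=; apply: (@le_trans _ _ (`|a i| * `|X i w|)).
    by rewrite ler_wpM2l // real_ler_norm // num_real.
  by rewrite lerDl sumr_ge0 // => j _; rewrite mulr_ge0.
- rewrite /g; apply: integrableD => //.
    exact: finite_measure_integrable_cst.
  apply: integrable_sum => // i _.
  have := integrableZl measurableT `|a i| (integrable_norm (intX i)).
  by congr (_.-integrable _ _).
Qed.

Lemma finV c a : ('E_P[V c a] \is a fin_num)%E.
Proof. by rewrite unlock; apply: integrable_fin_num => //; exact: intV. Qed.


Definition vec (c : R) (a : 'I_n -> R) : 'I_n.+1 -> R :=
  fun j => if unlift ord0 j is Some i then a i else c.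

Lemma Xnorm_vec c a : Xnorm P X (vec c a) = ('E_P[V c a])%E.
Proof.
rewrite Xnorm_W /vec unlift_none; congr (expectation P _); apply/funext => w.
by rewrite /V /W; congr (Num.max _ _); apply: eq_bigr => i _; rewrite liftK.
Qed.

Definition hm (a : 'I_n -> R) (m : nat) w :=
  m.+1%:R * (V (1 + m.+1%:R^-1) a w - V 1 a w).

Lemma V_pos c a w : 0 <= c -> V c a w = Num.max c (W a w).
Proof. by move=> c0; rewrite /V ger0_norm. Qed.

Lemma hm_ge0 a m w : 0 <= hm a m w.
Proof.
rewrite /hm mulr_ge0 // subr_ge0 !V_pos ?addr_ge0 ?invr_ge0 //.
by rewrite le_max2 // lerDl invr_ge0.
Qed.

Lemma hm_le1 a m w : hm a m w <= 1.
Proof.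
rewrite /hm !V_pos ?addr_ge0 ?invr_ge0 //.
set e := m.+1%:R^-1.
have e0 : 0 < e by rewrite invr_gt0.
suff key : Num.max (1 + e) (W a w) - Num.max 1 (W a w) <= e.
  by apply: (le_trans (ler_wpM2l _ key)) => //; rewrite mulfV.
rewrite lerBlDl.
case: (leP (W a w) 1) => hW.
  rewrite !max_l //; last by rewrite (le_trans hW) // lerDl ltW.
rewrite ge_max lerDl (ltW e0) andbT.
by rewrite lerD2r ltW.
Qed.

Lemma Vexp a m : ('E_P[V (1 + m.+1%:R^-1) a] =
  'E_P[V 1 a] + (m.+1%:R^-1)%:E * \int[P]_w (hm a m w)%:E)%E.
Proof.
rewrite unlock.
have -> : (fun w => (V (1 + m.+1%:R^-1) a w)%:E) =
          (fun w => (V 1 a w)%:E + (m.+1%:R^-1)%:E * (hm a m w)%:E)%E.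
  apply/funext => w; rewrite -EFinM -EFinD /hm mulrA mulVf // mul1r.
  by rewrite [V 1 a w + _]addrC subrK.
have mh : measurable_fun setT (hm a m).
  apply: measurable_funM; first exact: measurable_cst.
  by apply: measurable_funB; exact: mV.
rewrite ge0_integralD //.
- congr (_ + _)%E; rewrite ge0_integralZl //.
  + exact/measurable_EFinP.
  + by move=> w _; exact: (hm_ge0 a m w).
- by move=> w _; exact: (V_ge0 1 a w).
- exact/measurable_EFinP/mV.
- by move=> w _; apply: mule_ge0; [by rewrite lee_fin invr_ge0 | exact: (hm_ge0 a m w)].
- apply: emeasurable_funM; first exact: measurable_cst.
  exact/measurable_EFinP.
Qed.


Lemma L2 a : (fun m => (m.+1%:R)%:E * (Xnorm P X (vec (1 + m.+1%:R^-1) a)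
     - Xnorm P X (vec 1 a)))%E @ \oo --> P [set w | W a w <= 1].
Proof.
have eqm m : ((m.+1%:R)%:E * (Xnorm P X (vec (1 + m.+1%:R^-1) a)
     - Xnorm P X (vec 1 a)) = \int[P]_w (hm a m w)%:E)%E.
  rewrite !Xnorm_vec Vexp addeC addeK ?finV // muleA -EFinM mulfV //.
  by rewrite mul1e.
rewrite (_ : (fun m => _) = (fun m => \int[P]_w (hm a m w)%:E)%E); last first.
  by apply/funext => m; rewrite eqm.
have mSet : measurable [set w | W a w <= 1] by apply: mle; exact: mW.
rewrite -(setIT [set w | W a w <= 1]) -integral_indic //.
apply: (@dominated_cvg _ _ _ _ _ measurableT _ _ (cst 1%:E)).
- move=> m; apply/measurable_EFinP; apply: measurable_funM; first exact: measurable_cst.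
  by apply: measurable_funB; exact: mV.
- move=> w _; case: (leP (W a w) 1) => hW.
    rewrite indicE mem_set //.
    rewrite (_ : (fun m => _) = fun=> 1%:E); first exact: cvg_cst.
    apply/funext => m; congr (_%:E); rewrite /hm !V_pos ?addr_ge0 ?invr_ge0 //.
    rewrite !max_l //; last by rewrite (le_trans hW) // lerDl invr_ge0.
    by rewrite addrC addKr mulfV.
  rewrite indicE memNset /=; last by apply/negP; rewrite -ltNge.
  apply: cvg_near_cst.
  have [N _ hN] := near_infty_natSinv_lt (PosNum (eq_ind_r is_true hW (subr_gt0 1 (W a w)))).
  exists N => // m /= Nm; have := hN m Nm => /= em.
  congr (_%:E); rewrite /hm !V_pos ?addr_ge0 ?invr_ge0 //.
  rewrite !max_r ?subrr ?mulr0 //; first exact: ltW.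
  by rewrite -lerBrDl ltW.
- by [].
- exact: finite_measure_integrable_cst.
- move=> m w _ /=; rewrite lee_fin ger0_norm ?hm_ge0 //; exact: hm_le1.
Qed.


Lemma L3 t : (forall i, 0 < t i) ->
  distr_fun P X t = P [set w | W (fun i => (t i)^-1) w <= 1].
Proof.
move=> ht; rewrite /distr_fun; congr (P _); apply/seteqP; split => w /=.
  move=> h; apply/W_le => // i.
  rewrite ger0_norm; last by rewrite invr_ge0 ltW.
  by rewrite mulrC ler_pdivrMr // mul1r.
move/W_le => /(_ ler01) h i; move: (h i).
rewrite ger0_norm; last by rewrite invr_ge0 ltW.
by rewrite mulrC ler_pdivrMr // mul1r.
Qed.

Lemma L4 t : (fun m => distr_fun P X (fun i => t i + m.+1%:R^-1)) @ \oo -->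
  distr_fun P X t.
Proof.
rewrite /distr_fun.
have -> : [set w | forall i, X i w <= t i] =
    \bigcap_m [set w | forall i, X i w <= t i + m.+1%:R^-1].
  apply/seteqP; split => w /=.
    move=> h m _ i; apply: (le_trans (h i)); by rewrite lerDl invr_ge0.
  move=> h i; apply/negPn/negP; rewrite -ltNge => hlt.
  have [N _ hN] := near_infty_natSinv_lt (PosNum (eq_ind_r is_true hlt (subr_gt0 (t i) (X i w)))).
  have := hN N (leqnn N) => /=; rewrite ltrBrDl => hN'.
  by move: (h N I i); rewrite leNgt hN'.
apply: nonincreasing_cvg_mu.
- by rewrite (le_lt_trans (probability_le1 _ _)) ?ltry //; exact: mS.
- by move=> m; exact: mS.
- by apply: bigcapT_measurable => m; exact: mS.
- move=> m m' mm'; apply/subsetPset => w /= h i; apply: (le_trans (h i)).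
  by rewrite lerD2l lef_pV2 ?posrE // ler_nat.
Qed.

Lemma L5 t i : t i < 0 -> distr_fun P X t = 0%E.
Proof.
move=> ti; have [hae _] := HX i.
apply/negligibleP; first exact: mS.
apply: negligibleS hae => w /= h hX0; move: (h i) => hx.
by move: (le_lt_trans (le_trans hX0 hx) ti); rewrite ltxx.
Qed.

End generic.

Lemma dir1 (R : realType) (d : nat)
  (d1 : measure_display) (T1 : measurableType d1) (P1 : probability T1 R)
  (d2 : measure_display) (T2 : measurableType d2) (P2 : probability T2 R)
  (X : 'I_d -> T1 -> R) (Y : 'I_d -> T2 -> R)
  (hX : random_vector X) (hY : random_vector Y) :
  distr_fun P1 X = distr_fun P2 Y ->
  (forall x : 'I_d.+1 -> R, Xnorm P1 X x = Xnorm P2 Y x).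
Proof.
move=> hF x; rewrite !Xnorm_W (@EV_ccdf _ _ _ _ _ _ hX) (@EV_ccdf _ _ _ _ _ _ hY).
apply: eq_integral => r.
rewrite inE /= in_itv /= andbT => r0.
rewrite (@PVgt _ _ _ _ _ _ hX) (@PVgt _ _ _ _ _ _ hY); case: ifP => // cr; congr (1 - _)%E.
have h1 := @L1 _ _ _ P1 _ _ hX (fun i => x (lift ord0 i)) r r0.
have h2 := @L1 _ _ _ P2 _ _ hY (fun i => x (lift ord0 i)) r r0.
rewrite hF in h1.
by rewrite -(cvg_lim (@ereal_hausdorff R) h1) -(cvg_lim (@ereal_hausdorff R) h2).
Qed.

Lemma dir2 (R : realType) (d : nat)
  (d1 : measure_display) (T1 : measurableType d1) (P1 : probability T1 R)
  (d2 : measure_display) (T2 : measurableType d2) (P2 : probability T2 R)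
  (X : 'I_d -> T1 -> R) (Y : 'I_d -> T2 -> R)
  (hX : random_vector X) (hY : random_vector Y)
  (HX : condH P1 X) (HY : condH P2 Y) :
  (forall x : 'I_d.+1 -> R, Xnorm P1 X x = Xnorm P2 Y x) ->
  distr_fun P1 X = distr_fun P2 Y.
Proof.
move=> hN.
have hW a : P1 [set w | W d X a w <= 1] = P2 [set w | W d Y a w <= 1].
  have h1 := @L2 _ _ _ P1 _ _ hX HX a.
  have h2 := @L2 _ _ _ P2 _ _ hY HY a.
  move: h1; rewrite (_ : (fun m => _) = (fun m => ((m.+1%:R)%:E *
     (Xnorm P2 Y (vec d (1 + m.+1%:R^-1) a) - Xnorm P2 Y (vec d 1 a)))%E)); last first.
    by apply/funext => m; rewrite !hN.
  move=> h1.
  by rewrite -(cvg_lim (@ereal_hausdorff R) h1) -(cvg_lim (@ereal_hausdorff R) h2).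
apply/funext => t.
have [h|h] := pselect (forall i, 0 <= t i).
  have h1 := @L4 _ _ _ P1 _ _ hX t.
  have h2 := @L4 _ _ _ P2 _ _ hY t.
  have tpos m i : 0 < t i + m.+1%:R^-1 by rewrite ltr_wpDl // invr_gt0.
  move: h1; rewrite (_ : (fun m => _) = (fun m => distr_fun P2 Y (fun i => t i + m.+1%:R^-1))); last first.
    apply/funext => m; rewrite (@L3 _ _ _ P1 _ X) // (@L3 _ _ _ P2 _ Y) //.
  move=> h1.
  by rewrite -(cvg_lim (@ereal_hausdorff R) h1) -(cvg_lim (@ereal_hausdorff R) h2).
have [i ti] : exists i, t i < 0.
  apply/not_existsP => hne; apply: h => i.
  by rewrite leNgt; apply/negP => hi; apply: (hne i).
by rewrite (@L5 _ _ _ P1 _ _ hX HX t i ti) (@L5 _ _ _ P2 _ _ hY HY t i ti).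
Qed.

Theorem theorem2p2 (R : realType) (d : nat) (hd : (0 < d)%N)
  (d1 : measure_display) (T1 : measurableType d1) (P1 : probability T1 R)
  (d2 : measure_display) (T2 : measurableType d2) (P2 : probability T2 R)
  (X : 'I_d -> T1 -> R) (Y : 'I_d -> T2 -> R)
  (hX : random_vector X) (hY : random_vector Y)
  (HX : condH P1 X) (HY : condH P2 Y) :
  distr_fun P1 X = distr_fun P2 Y <->
  (forall x : 'I_d.+1 -> R, Xnorm P1 X x = Xnorm P2 Y x).
Proof.
split; first exact: dir1.
exact: dir2.
Qed.
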